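(* Let $V$ be a finite-dimensional real vector space and $\mathcal{C} \subset V$ a proper cone. Then \[ \gamma(\mathcal{C}) = \sup_{K \text{ sole of } \mathcal{C}} \gamma_{\mathrm{aff}}(K). \]
   Context: A convex cone $\mathcal{C} \subset V$ is proper if it is closed, salient ($\mathcal{C} \cap (-\mathcal{C}) = \{0\}$) and generating ($\mathcal{C} - \mathcal{C} = V$). Its dual cone is $\mathcal{C}^* = \{f \in V^* : f(x) \geq 0 \text{ for all } x \in \mathcal{C}\}$. A sole of $\mathcal{C}$ is a set $\{x \in \mathcal{C} : f(x) = \alpha\}$ with $f \in \mathrm{int}(\mathcal{C}^* )$ and $\alpha > 0$; it is a convex body in the affine hyperplane $\{f = \alpha\}$. A linear map $\Psi : V \to V$ is $\mathcal{C}$-positive if $\Psi(\mathcal{C}) \subset \mathcal{C}$, strictly $\mathcal{C}$-positive if $\Psi(\mathcal{C}\setminus\{0\}) \subset \mathrm{int}(\mathcal{C})$, and $\mathcal{C}$-primitive if it is $\mathcal{C}$-positive and some power $\Psi^k$ ($k \geq 1$) is strictly $\mathcal{C}$-positive; the smallest such $k$ is $\gamma(\mathcal{C},\Psi)$, and the maximal exponent $\gamma(\mathcal{C})$ is the supremum of $\gamma(\mathcal{C},\Psi)$ over all $\mathcal{C}$-primitive $\Psi$. For a convex body $K$ (compact convex set with nonempty interior) in a finite-dimensional affine space $W$, an affine map $\Phi : W \to W$ is $K$-positive if $\Phi(K) \subset K$, strictly $K$-positive if $\Phi(K) \subset \mathrm{int}(K)$, $K$-primitive if it is $K$-positive and some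 $\Phi^k$ ($k\ge 1$) is strictly $K$-positive; the smallest such $k$ is $\gamma_{\mathrm{aff}}(K,\Phi)$, and $\gamma_{\mathrm{aff}}(K)$ is the supremum of $\gamma_{\mathrm{aff}}(K,\Phi)$ over all $K$-primitive affine maps $\Phi : W \to W$ (with $W$ the affine hyperplane containing the sole). *)

(* Defs.v *)
From HB Require Import structures.
From mathcomp Require Import all_boot all_order all_algebra.
From mathcomp Require Import all_classical all_reals all_analysis.
Set Implicit Arguments. Unset Strict Implicit. Unset Printing Implicit Defensive.
Import Order.TTheory GRing.Theory Num.Theory.
Import numFieldNormedType.Exports.
Local Open Scope classical_set_scope.
Local Open Scope ring_scope.

(* V = 'rV[R]_n (a real vector space of dimension n); V^* is represented by
   row vectors f acting through the pairing [pair f, x] = sum_i f_i x_i. *)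

Definition pairing (R : realType) (n : nat) (f x : 'rV[R]_n) : R :=
  \sum_(i < n) f ord0 i * x ord0 i.

Definition convex_cone (R : realType) (n : nat) (C : set 'rV[R]_n) : Prop :=
  C 0 /\ (forall x y, C x -> C y -> C (x + y)) /\
  (forall (t : R) x, 0 <= t -> C x -> C (t *: x)).

Definition proper_cone (R : realType) (n : nat) (C : set 'rV[R]_n) : Prop :=
  [/\ convex_cone C, closed C,
      (forall x, C x -> C (- x) -> x = 0) &
      (forall v, exists x y, [/\ C x, C y & v = x - y])].

Definition dual_cone (R : realType) (n : nat) (C : set 'rV[R]_n) : set 'rV[R]_n :=
  [set f | forall x, C x -> 0 <= pairing f x].

Definition hyperplane (R : realType) (n : nat) (f : 'rV[R]_n) (a : R) : set 'rV[R]_n :=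
  [set x | pairing f x = a].

Definition sole (R : realType) (n : nat) (C : set 'rV[R]_n) (f : 'rV[R]_n) (a : R)
  : set 'rV[R]_n := [set x | C x /\ pairing f x = a].

Definition rel_interior (R : realType) (n : nat) (W K : set 'rV[R]_n) : set 'rV[R]_n :=
  [set x | exists U : set 'rV[R]_n, [/\ open U, U x & U `&` W `<=` K]].

Definition linmap (R : realType) (n : nat) (A : 'M[R]_n) : 'rV[R]_n -> 'rV[R]_n :=
  fun x => x *m A.

Definition C_positive (R : realType) (n : nat) (C : set 'rV[R]_n)
  (P : 'rV[R]_n -> 'rV[R]_n) : Prop := forall x, C x -> C (P x).

Definition C_strictly_positive (R : realType) (n : nat) (C : set 'rV[R]_n)
  (P : 'rV[R]_n -> 'rV[R]_n) : Prop := forall x, C x -> x != 0 -> interior C (P x).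

Definition least_exponent (Q : nat -> Prop) (k : nat) : Prop :=
  [/\ (1 <= k)%N, Q k & forall j, (1 <= j)%N -> Q j -> (k <= j)%N].

Definition gamma_cone (R : realType) (n : nat) (C : set 'rV[R]_n) : \bar R :=
  ereal_sup [set ((k%:R : R)%:E) | k in
    [set k | exists A : 'M[R]_n, C_positive C (linmap A) /\
       least_exponent (fun j => C_strictly_positive C (iter j (linmap A))) k]].

(* affine map x |-> x *m A + b ; affine maps W -> W are exactly the
   restrictions of affine maps of V preserving W *)
Definition affmap (R : realType) (n : nat) (A : 'M[R]_n) (b : 'rV[R]_n)
  : 'rV[R]_n -> 'rV[R]_n := fun x => x *m A + b.

Definition K_positive (R : realType) (n : nat) (K : set 'rV[R]_n)
  (P : 'rV[R]_n -> 'rV[R]_n) : Prop := forall x, K x -> K (P x).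

Definition K_strictly_positive (R : realType) (n : nat) (W K : set 'rV[R]_n)
  (P : 'rV[R]_n -> 'rV[R]_n) : Prop := forall x, K x -> rel_interior W K (P x).

Definition gamma_aff (R : realType) (n : nat) (W K : set 'rV[R]_n) : \bar R :=
  ereal_sup [set ((k%:R : R)%:E) | k in
    [set k | exists (A : 'M[R]_n) (b : 'rV[R]_n),
       [/\ (forall x, W x -> W (affmap A b x)),
           K_positive K (affmap A b) &
           least_exponent (fun j => K_strictly_positive W K (iter j (affmap A b))) k]]].

Definition sup_soles_gamma_aff (R : realType) (n : nat) (C : set 'rV[R]_n) : \bar R :=
  ereal_sup [set g | exists (f : 'rV[R]_n) (a : R),
     [/\ interior (dual_cone C) f, 0 < a &
         g = gamma_aff (hyperplane f a) (sole C f a)]].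

(* Main.v *)
From HB Require Import structures.
Require Import Defs.
From mathcomp Require Import all_boot all_order all_algebra.
From mathcomp Require Import all_classical all_reals all_analysis.
From mathcomp Require Import ring lra.
Set Implicit Arguments. Unset Strict Implicit. Unset Printing Implicit Defensive.
Import Order.TTheory GRing.Theory Num.Theory.
Import numFieldNormedType.Exports.
Local Open Scope classical_set_scope.
Local Open Scope ring_scope.


Section Basics.
Variables (R : realType) (n : nat).
Implicit Types (f g x y : 'rV[R]_n) (A : 'M[R]_n).

Lemma pairingE f x : pairing f x = (f *m x^T) ord0 ord0.
Proof. by rewrite /pairing mxE; apply: eq_bigr => i _; rewrite mxE. Qed.

Lemma pairing_mul f x A : pairing f (x *m A) = pairing (f *m A^T) x.
Proof. by rewrite !pairingE trmx_mul mulmxA. Qed.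

Lemma pairingC f x : pairing f x = pairing x f.
Proof. by apply: eq_bigr => i _; rewrite mulrC. Qed.

Lemma pairingDr f x y : pairing f (x + y) = pairing f x + pairing f y.
Proof. by rewrite /pairing -big_split; apply: eq_bigr => i _; rewrite mxE mulrDr. Qed.

Lemma pairingZr f (t : R) x : pairing f (t *: x) = t * pairing f x.
Proof. by rewrite /pairing mulr_sumr; apply: eq_bigr => i _; rewrite mxE mulrCA. Qed.

Lemma pairingNr f x : pairing f (- x) = - pairing f x.
Proof. by rewrite -scaleN1r pairingZr mulN1r. Qed.

Lemma pairingBr f x y : pairing f (x - y) = pairing f x - pairing f y.
Proof. by rewrite pairingDr pairingNr. Qed.

Lemma pairing0r f : pairing f 0 = 0.
Proof. by rewrite -(scale0r (0 : 'rV[R]_n)) pairingZr mul0r. Qed.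

Lemma pairingDl f g x : pairing (f + g) x = pairing f x + pairing g x.
Proof. by rewrite pairingC pairingDr -!(pairingC x). Qed.

Lemma pairingZl f (t : R) x : pairing (t *: f) x = t * pairing f x.
Proof. by rewrite pairingC pairingZr pairingC. Qed.

Lemma pairingBl f g x : pairing (f - g) x = pairing f x - pairing g x.
Proof. by rewrite pairingC pairingBr -!(pairingC x). Qed.

Lemma pairing0l x : pairing 0 x = 0.
Proof. by rewrite pairingC pairing0r. Qed.

Lemma pairing_self_gt0 x : x != 0 -> 0 < pairing x x.
Proof.
move=> x0; rewrite lt_def; apply/andP; split; last first.
  by apply: sumr_ge0 => i _; rewrite -expr2 sqr_ge0.
apply/negP => /eqP H; move/negP: x0; apply; apply/eqP/rowP => i.
rewrite mxE; apply/eqP; rewrite -(orbb (x ord0 i == 0)) -mulf_eq0; apply/eqP.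
by apply: (psumr_eq0P _ H) => // j _; rewrite -expr2 sqr_ge0.
Qed.

Lemma pairing_continuous (T : topologicalType) (u v : T -> 'rV[R]_n) :
  continuous u -> continuous v -> continuous (fun t => pairing (u t) (v t)).
Proof.
move=> cu cv; rewrite /pairing.
apply: (@continuous_big _ _ _ _ _ add_continuous) => i _ t.
apply: continuousM.
  exact: (continuous_comp (cu t) (@coord_continuous R 1 n ord0 i (u t))).
exact: (continuous_comp (cv t) (@coord_continuous R 1 n ord0 i (v t))).
Qed.

Lemma id_continuous' (T : topologicalType) : continuous (@id T).
Proof. by move=> t; apply: cvg_id. Qed.

Lemma pairingr_continuous f : continuous (pairing f).
Proof.
exact: (@pairing_continuous _ (fun=> f) id (@cst_continuous _ _ f) (@id_continuous' _)).
Qed.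

Lemma pairingl_continuous x : continuous (fun g => pairing g x).
Proof.
exact: (@pairing_continuous 'rV[R]_n (fun y => y) (fun _ => x) (@id_continuous' _) (@cst_continuous _ _ x)).
Qed.

End Basics.


Section Topo.
Variables (R : realType) (n : nat).
Implicit Types (f g x y z : 'rV[R]_n) (A : 'M[R]_n) (C : set 'rV[R]_n).

Lemma coord_le_norm x i : `|x ord0 i| <= `|x|.
Proof.
rewrite [leRHS]/Num.Def.normr /= mx_normrE.
exact: (@le_bigmax _ _ _ 0 (fun ij : 'I_1 * 'I_n => `|x ij.1 ij.2|) (ord0, i)).
Qed.

Lemma nbhs_dir (P : set 'rV[R]_n) z d : nbhs z P ->
  exists2 e : R, 0 < e & forall t : R, `|t| < e -> P (z + t *: d).
Proof.
move=> /nbhs_normP [eps /= eps0 H].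
exists (eps / (`|d| + 1)); first by rewrite divr_gt0 // ltr_wpDl.
move=> t Ht; apply: H => /=.
rewrite opprD addNKr normrN normrZ.
rewrite ltr_pdivlMr ?ltr_wpDl // in Ht.
apply: le_lt_trans Ht; rewrite ler_wpM2l // lerDl //.
Qed.

Lemma pos_of_interior (P : set 'rV[R]_n) z w : nbhs z P ->
  (forall y, P y -> 0 <= pairing y w) -> w != 0 -> 0 < pairing z w.
Proof.
move=> /(nbhs_dir (- w)) [e e0 H] Hp w0.
have e2 : `|e / 2| < e by rewrite gtr0_norm ?divr_gt0 // ltr_pdivrMr // ltr_pMr // ltr1n.
have := Hp _ (H (e / 2) e2).
rewrite scalerN pairingBl pairingZl subr_ge0 => H1.
apply: lt_le_trans H1; apply: mulr_gt0; first by rewrite divr_gt0.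
exact: pairing_self_gt0.
Qed.

End Topo.


Section Cone.
Variables (R : realType) (n : nat).
Implicit Types (f g h x y z : 'rV[R]_n) (A : 'M[R]_n) (C : set 'rV[R]_n).

Lemma int_dual_pos C f x : interior (dual_cone C) f -> C x -> x != 0 ->
  0 < pairing f x.
Proof. by move=> fi Cx x0; apply: (pos_of_interior fi) => // y; apply. Qed.

Lemma dual_int_pos C h z : dual_cone C h -> h != 0 -> interior C z ->
  0 < pairing h z.
Proof.
move=> hC h0 zi; rewrite pairingC; apply: (pos_of_interior zi) => // y Cy.
by rewrite pairingC; apply: hC.
Qed.

Lemma int_rel C f a z : interior C z ->
  rel_interior (hyperplane f a) (sole C f a) z.
Proof.
move=> zi; exists (interior C); split => //; first exact: open_interior.
by move=> y [/interior_subset Cy Wy].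
Qed.

Lemma cone_scale C t x : convex_cone C -> 0 <= t -> C x -> C (t *: x).
Proof. by move=> [_ [_ CZ]]; apply: CZ. Qed.

Lemma int_scale C z t : convex_cone C -> interior C z -> 0 < t ->
  interior C (t *: z).
Proof.
move=> cC zi t0; have /nbhs_normP [e /= e0 H] : nbhs z C := zi.
suff : nbhs (t *: z) C by [].
apply: (proj2 (nbhs_normP (t *: z) C)); exists (t * e); first by rewrite /= mulr_gt0.
move=> y /= Hy.
have -> : y = t *: (t^-1 *: y) by rewrite scalerA divff ?gt_eqF // scale1r.
apply: cone_scale => //; first exact: ltW.
apply: H => /=.
have -> : z - t^-1 *: y = t^-1 *: (t *: z - y).
  by rewrite scalerBr scalerA mulVf ?gt_eqF // scale1r.
rewrite normrZ gtr0_norm ?invr_gt0 // mulrC ltr_pdivrMr //.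
by rewrite mulrC.
Qed.

Lemma rel_int_scale C f a z t : convex_cone C -> 0 < a ->
  hyperplane f a z -> rel_interior (hyperplane f a) (sole C f a) z -> 0 < t ->
  interior C (t *: z).
Proof.
move=> cC a0 Wz [U [oU Uz sub]] t0.
have pt : pairing f (t *: z) = t * a by rewrite pairingZr Wz.
have pt0 : pairing f (t *: z) != 0 by rewrite pt mulf_neq0 ?gt_eqF.
pose h x := (a * (pairing f x)^-1) *: x.
have hz : h (t *: z) = z.
  rewrite /h pt scalerA -[RHS]scale1r; congr (_ *: _); field.
  by rewrite !gt_eqF.
have hc : {for (t *: z), continuous h}.
  apply: continuousZ; last exact: cvg_id.
  apply: continuousM; first exact: cst_continuous.
  by apply: continuousV => //; apply: pairingr_continuous.
have Uh : \forall x \near t *: z, U (h x).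
  by apply: hc; rewrite hz; apply: open_nbhs_nbhs.
have Pp : \forall x \near t *: z, 0 < pairing f x.
  have : nbhs (pairing f (t *: z)) [set r : R | 0 < r].
    apply: open_nbhs_nbhs; split; first exact: open_gt.
    by rewrite /= pt mulr_gt0.
  by move=> /(@pairingr_continuous R n f (t *: z)).
apply: filterS2 Uh Pp => x Ux px.
have Whx : hyperplane f a (h x).
  rewrite /hyperplane /= /h pairingZr; field; by rewrite gt_eqF.
have [Chx _] := sub _ (conj Ux Whx).
have -> : x = (pairing f x / a) *: h x.
  rewrite /h scalerA -[LHS]scale1r; congr (_ *: _); field.
  by rewrite !gt_eqF.
apply: cone_scale => //; apply: ltW; exact: divr_gt0.
Qed.

End Cone.


Section AffLin.
Variables (R : realType) (n : nat).
Implicit Types (f g h x y z b : 'rV[R]_n) (A : 'M[R]_n) (C : set 'rV[R]_n).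

Definition extM f (a : R) A b : 'M[R]_n := A + a^-1 *: (f^T *m b).

Lemma linM f a A b x :
  linmap (extM f a A b) x = x *m A + (pairing f x / a) *: b.
Proof.
rewrite /linmap /extM mulmxDr -scalemxAr mulmxA [x *m f^T]mx11_scalar.
rewrite mul_scalar_mx scalerA mxE pairingC /pairing; congr (_ + (_ *: _)).
rewrite mulrC; congr (_ * _); apply: eq_bigr => i _; rewrite mxE.
by [].
Qed.

Lemma iter_aff_W f a A b y j :
  (forall x, hyperplane f a x -> hyperplane f a (affmap A b x)) ->
  hyperplane f a y -> hyperplane f a (iter j (affmap A b) y).
Proof. by move=> HW Wy; elim: j => //= j IH; apply: HW. Qed.

Lemma iterM f a A b y t j : a != 0 ->
  (forall x, hyperplane f a x -> hyperplane f a (affmap A b x)) ->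
  hyperplane f a y ->
  iter j (linmap (extM f a A b)) (t *: y) = t *: iter j (affmap A b) y.
Proof.
move=> a0 HW Wy; elim: j => //= j ->.
rewrite linM pairingZr (iter_aff_W j HW Wy) /affmap scalerDr scalemxAl.
by rewrite -mulrA divff // mulr1.
Qed.

Lemma iter_lin0 A j : iter j (linmap A) 0 = 0.
Proof. by elim: j => //= j ->; rewrite /linmap mul0mx. Qed.

Lemma exps_equiv C f a A b j : convex_cone C -> interior (dual_cone C) f ->
  0 < a -> (forall x, hyperplane f a x -> hyperplane f a (affmap A b x)) ->
  C_strictly_positive C (iter j (linmap (extM f a A b))) <->
  K_strictly_positive (hyperplane f a) (sole C f a) (iter j (affmap A b)).
Proof.
move=> cC fi a0 HW; split.
  move=> Hs x [Cx Wx].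
  have x0 : x != 0 by apply/eqP => x0; move: Wx; rewrite x0 pairing0r => /eqP; rewrite eq_sym gt_eqF.
  have := Hs x Cx x0; rewrite -[x]scale1r iterM ?gt_eqF // scale1r => Hi.
  by apply: int_rel; rewrite scale1r.
move=> Hs x Cx x0.
have p0 := int_dual_pos fi Cx x0.
set p := pairing f x in p0.
have Wy : hyperplane f a ((a / p) *: x).
  rewrite /hyperplane /= pairingZr -/p; field; by rewrite gt_eqF.
have Ky : sole C f a ((a / p) *: x).
  by split => //; apply: cone_scale => //; apply: ltW; apply: divr_gt0.
have -> : x = (p / a) *: ((a / p) *: x).
  rewrite scalerA -[LHS]scale1r; congr (_ *: _); field; by rewrite !gt_eqF.
rewrite iterM ?gt_eqF //.
apply: (rel_int_scale cC a0); first exact: (iter_aff_W _ HW Wy).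
  exact: Hs.
by rewrite divr_gt0.
Qed.

Lemma pos_equiv C f a A b : convex_cone C -> interior (dual_cone C) f ->
  0 < a -> (forall x, hyperplane f a x -> hyperplane f a (affmap A b x)) ->
  K_positive (sole C f a) (affmap A b) ->
  C_positive C (linmap (extM f a A b)).
Proof.
move=> cC fi a0 HW HK x Cx.
have [->|x0] := eqVneq x 0; first by rewrite /linmap mul0mx; case: cC.
have p0 := int_dual_pos fi Cx x0.
set p := pairing f x in p0.
have Wy : hyperplane f a ((a / p) *: x).
  rewrite /hyperplane /= pairingZr -/p; field; by rewrite gt_eqF.
have Ky : sole C f a ((a / p) *: x).
  by split => //; apply: cone_scale => //; apply: ltW; apply: divr_gt0.
have -> : x = (p / a) *: ((a / p) *: x).
  rewrite scalerA -[LHS]scale1r; congr (_ *: _); field; by rewrite !gt_eqF.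
have := iterM (p / a) 1 (lt0r_neq0 a0) HW Wy => /= ->.
apply: cone_scale => //; first by apply: ltW; rewrite divr_gt0.
by have [] := HK _ Ky.
Qed.

Lemma least_exponent_equiv (Q Q' : nat -> Prop) k :
  (forall j, Q j <-> Q' j) -> least_exponent Q k -> least_exponent Q' k.
Proof.
move=> H [k1 Qk Hmin]; split => //; first by apply/H.
by move=> j j1 /H; apply: Hmin.
Qed.

End AffLin.


Section Assembly.
Variables (R : realType) (n : nat).
Implicit Types (f g h x y z b : 'rV[R]_n) (A : 'M[R]_n) (C : set 'rV[R]_n).

Lemma iter_linZ A (c : R) j x :
  iter j (linmap (c *: A)) x = c ^+ j *: iter j (linmap A) x.
Proof.
elim: j => [|j IH] /=; first by rewrite scale1r.
by rewrite IH /linmap -scalemxAl -scalemxAr scalerA exprS mulrC.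
Qed.

Lemma strict_Z C A (c : R) j : convex_cone C -> 0 < c ->
  C_strictly_positive C (iter j (linmap (c *: A))) <->
  C_strictly_positive C (iter j (linmap A)).
Proof.
move=> cC c0; split => H x Cx x0; have := H x Cx x0; rewrite iter_linZ.
  move=> Hi; have -> : iter j (linmap A) x = (c ^+ j)^-1 *: (c ^+ j *: iter j (linmap A) x).
    by rewrite scalerA mulVf ?scale1r // expf_neq0 // gt_eqF.
  by apply: int_scale => //; rewrite invr_gt0 exprn_gt0.
by move=> Hi; apply: int_scale => //; rewrite exprn_gt0.
Qed.

Lemma sole_le_cone C f a : convex_cone C -> interior (dual_cone C) f -> 0 < a ->
  (gamma_aff (hyperplane f a) (sole C f a) <= gamma_cone C)%E.
Proof.
move=> cC fi a0; apply: le_ereal_sup => _ [k [A [b [HW HK Hl]]] <-].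
exists k => //; exists (extM f a A b); split; first exact: pos_equiv.
apply: least_exponent_equiv Hl => j; exact: (iff_sym (exps_equiv j cC fi a0 HW)).
Qed.

Lemma cone_le_sole C k A f (l : R) : convex_cone C -> interior (dual_cone C) f ->
  0 < l -> (forall x, pairing f (x *m A) = l * pairing f x) ->
  C_positive C (linmap A) ->
  least_exponent (fun j => C_strictly_positive C (iter j (linmap A))) k ->
  (((k%:R : R)%:E) <= gamma_aff (hyperplane f 1) (sole C f 1))%E.
Proof.
move=> cC fi l0 Hf Hp Hl; apply: ereal_sup_ubound; exists k => //.
have eM : extM f 1 (l^-1 *: A) 0 = l^-1 *: A.
  by rewrite /extM mulmx0 scaler0 addr0.
have HW : forall x, hyperplane f 1 x -> hyperplane f 1 (affmap (l^-1 *: A) 0 x).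
  move=> x; rewrite /hyperplane /affmap /= addr0 -scalemxAr pairingZr Hf => ->.
  by rewrite mulr1 mulVf // gt_eqF.
exists (l^-1 *: A), 0; split => //.
  move=> x [Cx Wx]; split; last exact: HW.
  rewrite /affmap addr0 -scalemxAr; apply: cone_scale => //.
    by rewrite invr_ge0 ltW.
  exact: Hp.
apply: least_exponent_equiv Hl => j.
rewrite -(exps_equiv j cC fi ltr01 HW) eM strict_Z //.
by rewrite invr_gt0.
Qed.

Lemma main_of_PF C :
  (forall A k, C_positive C (linmap A) -> (1 <= k)%N ->
     C_strictly_positive C (iter k (linmap A)) ->
     exists f (l : R), [/\ interior (dual_cone C) f, 0 < l &
        forall x, pairing f (x *m A) = l * pairing f x]) ->
  convex_cone C -> gamma_cone C = sup_soles_gamma_aff C.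
Proof.
move=> PF cC; apply/eqP; rewrite eq_le; apply/andP; split.
  apply: ub_ereal_sup => _ [k [A [Hp Hl]] <-].
  have [k1 Hk _] := Hl.
  have [f [l [fi l0 Hf]]] := PF A k Hp k1 Hk.
  apply: le_trans (cone_le_sole cC fi l0 Hf Hp Hl) _.
  apply: ereal_sup_ubound; exists f, 1; split => //.
apply: ub_ereal_sup => _ [f [a [fi a0 ->]]].
exact: sole_le_cone.
Qed.

End Assembly.


Section Norm1.
Variables (R : realType) (n : nat).
Implicit Types (f g h w x y z : 'rV[R]_n) (A : 'M[R]_n) (C : set 'rV[R]_n).

Definition N1 x : R := \sum_i `|x ord0 i|.

Lemma N1_ge0 x : 0 <= N1 x.
Proof. by apply: sumr_ge0 => i _. Qed.

Lemma N1_eq0 x : N1 x = 0 -> x = 0.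
Proof.
move=> H; apply/rowP => i; rewrite !mxE; apply/eqP; rewrite -normr_eq0; apply/eqP.
exact: (psumr_eq0P _ H).
Qed.

Lemma N1_neq0 x : x != 0 -> 0 < N1 x.
Proof.
move=> x0; rewrite lt_def N1_ge0 andbT; apply/eqP => /N1_eq0 H.
by rewrite H eqxx in x0.
Qed.

Lemma N1Z (t : R) x : N1 (t *: x) = `|t| * N1 x.
Proof. by rewrite /N1 mulr_sumr; apply: eq_bigr => i _; rewrite mxE normrM. Qed.

Lemma coord_le_N1 x i : `|x ord0 i| <= N1 x.
Proof.
rewrite /N1 (bigD1 i) //= lerDl; exact: sumr_ge0.
Qed.

Lemma N1_continuous : continuous N1.
Proof.
rewrite /N1; apply: (@continuous_big _ _ _ _ _ add_continuous) => i _ t.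
exact: (continuous_comp (@coord_continuous R 1 n ord0 i t) (@norm_continuous _ R^o _)).
Qed.

Lemma pairing_le_abs w x : `|pairing w x| <= \sum_i `|w ord0 i| * `|x ord0 i|.
Proof.
rewrite /pairing; apply: le_trans (ler_norm_sum _ _ _) _.
by apply: ler_sum => i _; rewrite normrM.
Qed.

Lemma pairing_le_norm w x : `|pairing w x| <= `|w| * N1 x.
Proof.
apply: le_trans (pairing_le_abs w x) _; rewrite /N1 mulr_sumr.
by apply: ler_sum => i _; apply: ler_wpM2r => //; apply: coord_le_norm.
Qed.

Lemma pairing_le_box w x : (forall i, `|x ord0 i| <= 1) -> `|pairing w x| <= N1 w.
Proof.
move=> H; apply: le_trans (pairing_le_abs w x) _; rewrite /N1.
by apply: ler_sum => i _; rewrite -[leRHS]mulr1; apply: ler_wpM2l.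
Qed.

Lemma closed_ge_fun (T : topologicalType) (F : T -> R) (c : R) :
  continuous F -> closed [set t | c <= F t].
Proof. by move=> cF; have := proj1 (continuous_closedP F) cF _ (@closed_ge _ c). Qed.

Lemma closed_eq_fun (T : topologicalType) (F : T -> R) (c : R) :
  continuous F -> closed [set t | F t = c].
Proof. by move=> cF; have := proj1 (continuous_closedP F) cF _ (@closed_eq _ c). Qed.

Lemma dual_closed C : closed (dual_cone C).
Proof.
have -> : dual_cone C = \bigcap_(x in C) [set g | 0 <= pairing g x].
  by apply/seteqP; split => g H x Cx; apply: H.
by apply: closed_bigI => x _; apply: closed_ge_fun; apply: pairingl_continuous.
Qed.

Lemma box_compact (B : 'I_n -> R) :
  compact [set v : 'rV[R]_n | forall i, (`[- B i, B i]%classic) (v ord0 i)].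
Proof. by apply: (@rV_compact _ n (fun i => `[- B i, B i]%classic)) => i; exact: segment_compact. Qed.

Lemma in_box (B : 'I_n -> R) (v : 'rV[R]_n) : (forall i, `|v ord0 i| <= B i) ->
  forall i, (`[- B i, B i]%classic) (v ord0 i).
Proof. by move=> H i; rewrite /= in_itv /= -ler_norml. Qed.

Definition C1 C := [set x | C x /\ N1 x = 1].

Lemma C1_compact C : closed C -> compact (C1 C).
Proof.
move=> clC; have Hb := box_compact (B := fun=> 1 : R).
have cl : closed (C1 C).
  apply: closedI => //; apply: closed_eq_fun; exact: N1_continuous.
have sub : C1 C `<=` [set v : 'rV[R]_n | forall i, (`[- (fun=> 1 : R) i, (fun=> 1 : R) i]%classic) (v ord0 i)].
  move=> x [Cx Nx]; apply: in_box => i; rewrite -Nx; exact: coord_le_N1.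
exact: (subclosed_compact cl Hb sub).
Qed.

Lemma C1_normalize C x : convex_cone C -> C x -> x != 0 ->
  C1 C ((N1 x)^-1 *: x).
Proof.
move=> cC Cx x0; have N0 := N1_neq0 x0; split.
  by apply: cone_scale => //; rewrite invr_ge0 ltW.
by rewrite N1Z gtr0_norm ?invr_gt0 // mulVf // gt_eqF.
Qed.

Lemma C1_decomp C x : x = N1 x *: ((N1 x)^-1 *: x) \/ x = 0.
Proof.
have [->|x0] := eqVneq x 0; first by right.
by left; rewrite scalerA divff ?scale1r // gt_eqF // N1_neq0.
Qed.

Lemma int_dual_of_pos C f x0 : convex_cone C -> closed C -> C x0 -> x0 != 0 ->
  (forall x, C x -> x != 0 -> 0 < pairing f x) -> interior (dual_cone C) f.
Proof.
move=> cC clC Cx0 x00 Hf.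
have ne : C1 C !=set0 by exists ((N1 x0)^-1 *: x0); exact: C1_normalize.
have [um /set_mem [Cum Num] Hmin] := compact_EVT_min ne (C1_compact clC)
  (continuous_subspaceT (@pairingr_continuous R n f)).
have um0 : um != 0 by apply/eqP => u0; move: Num; rewrite u0 /N1 big1 => [/eqP|i _]; [rewrite eq_sym oner_eq0 | rewrite mxE normr0].
have m0 := Hf _ Cum um0.
suff : nbhs f (dual_cone C) by [].
apply: (proj2 (nbhs_normP f (dual_cone C))); exists (pairing f um) => //=.
move=> g Hg x Cx; have [->|xn0] := eqVneq x 0; first by rewrite pairing0r.
have Ex : x = N1 x *: ((N1 x)^-1 *: x) by rewrite scalerA divff ?scale1r // gt_eqF // N1_neq0.
rewrite Ex pairingZr; apply: mulr_ge0; first exact: N1_ge0.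
set u := _ *: x.
have Cu : C1 C u by exact: C1_normalize.
have := Hmin u (mem_set Cu); have [_ Nu] := Cu.
have := pairing_le_norm (f - g) u; rewrite Nu mulr1 pairingBl.
move=> H1 H2; move: H1; rewrite ler_norml => /andP [_ H1].
have Hg' : `|f - g| < pairing f um by [].
lra.
Qed.

End Norm1.


Section Sep.
Variables (R : realType) (n : nat).
Implicit Types (f g h w x y z : 'rV[R]_n) (A : 'M[R]_n) (C : set 'rV[R]_n).

Lemma small_t (u w : R) : 0 <= w ->
  (forall t, 0 < t -> t < 1 -> 0 <= 2 * u + t * w) -> 0 <= u.
Proof.
move=> w0 H; rewrite leNgt; apply/negP => u0.
have D0 : 0 < w - u + 1 by lra.
have t0 : 0 < - u / (w - u + 1) by rewrite divr_gt0 // oppr_gt0.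
have t1 : - u / (w - u + 1) < 1 by rewrite ltr_pdivrMr // mul1r; lra.
have := H _ t0 t1.
set t := - u / (w - u + 1) => Ht.
have tD : t * (w - u + 1) = - u by rewrite /t mulrAC -mulrA divff ?mulr1 // gt_eqF.
have := mulr_ge0 Ht (ltW D0).
have -> : (2 * u + t * w) * (w - u + 1) = 2 * u * (w - u + 1) + w * (t * (w - u + 1)) by ring.
rewrite tD; nra.
Qed.

Lemma closed_le_fun (T : topologicalType) (F : T -> R) (c : R) :
  continuous F -> closed [set t | F t <= c].
Proof. by move=> cF; have := proj1 (continuous_closedP F) cF _ (@closed_le _ c). Qed.

Lemma pairing_self_ge0 x : 0 <= pairing x x.
Proof. by apply: sumr_ge0 => i _; rewrite -expr2 sqr_ge0. Qed.

Lemma coord_sq_le x i : x ord0 i * x ord0 i <= pairing x x.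
Proof.
rewrite /pairing (bigD1 i) //= lerDl; apply: sumr_ge0 => j _.
by rewrite -expr2 sqr_ge0.
Qed.

Lemma pairing_expand (d c : 'rV[R]_n) (t : R) :
  pairing (d + t *: c) (d + t *: c) =
  pairing d d + t * (2 * pairing d c + t * pairing c c).
Proof.
rewrite !pairingDl !pairingDr !pairingZl !pairingZr (pairingC c d); ring.
Qed.

Lemma separation C p : convex_cone C -> closed C -> ~ C p ->
  exists d, dual_cone C d /\ pairing d p < 0.
Proof.
move=> cC clC Cp.
pose q x := pairing (x - p) (x - p).
have cq : continuous q.
  have cs : continuous (fun x : 'rV[R]_n => x - p).
    by move=> x; apply: continuousB; [exact: cvg_id | exact: cst_continuous].
  exact: (pairing_continuous cs cs).
pose D := [set x | C x /\ q x <= q 0].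
have clD : closed D by apply: closedI => //; exact: closed_le_fun.
pose B i := `|p ord0 i| + (q 0 + 1).
have Hb := box_compact (B := B).
have sub : D `<=` [set v : 'rV[R]_n | forall i, (`[- B i, B i]%classic) (v ord0 i)].
  move=> x [Cx qx]; apply: in_box => i.
  have h1 := coord_sq_le (x - p) i.
  have q0 : 0 <= q 0 by apply: pairing_self_ge0.
  have h2 : `|(x - p) ord0 i| <= q 0 + 1.
    rewrite leNgt; apply/negP => hlt.
    have : (x - p) ord0 i * (x - p) ord0 i = `|(x - p) ord0 i| * `|(x - p) ord0 i|.
      by rewrite -normrM ger0_norm // -expr2 sqr_ge0.
    have h1' : (x - p) ord0 i * (x - p) ord0 i <= q x by [].
    move: hlt h1' qx q0; set a := `|_|; set y := _ * _; set Q0 := q 0; set Qx := q x.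
    move=> hlt h1' qx q0 E.
    have a1 : 1 < a by lra.
    have : a < a * a by rewrite -[X in X < _]mulr1 ltr_pM2l //; lra.
    lra.
  rewrite /B; move: h2; rewrite !mxE => h2.
  have := ler_normD (x ord0 i - p ord0 i) (p ord0 i); rewrite subrK.
  move=> h3; lra.
have cD : compact D := subclosed_compact clD Hb sub.
have ne : D !=set0.
  by exists 0; split; [case: cC | exact: lexx].
have [xs /set_mem [Cxs qxs] Hmin] := compact_EVT_min ne cD (continuous_subspaceT cq).
have Hglob : forall y, C y -> q xs <= q y.
  move=> y Cy; have [qy|qy] := leP (q y) (q 0).
    exact: Hmin (mem_set (conj Cy qy)).
  exact: le_trans qxs (ltW qy).
pose d := xs - p.
have Hdir : forall c, (forall t : R, 0 < t -> t < 1 -> C (xs + t *: c)) ->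
    0 <= pairing d c.
  move=> c Hc; have := small_t (pairing_self_ge0 c); apply => t t0 t1.
  have := Hglob _ (Hc t t0 t1); rewrite /q.
  have -> : xs + t *: c - p = d + t *: c by rewrite /d addrAC.
  rewrite pairing_expand -/d -[X in X <= _]addr0 lerD2l => H.
  by rewrite -(pmulr_rge0 _ t0).
exists d; split.
  move=> c Cc; apply: Hdir => t t0 _; case: cC => _ [CD CZ].
  by apply: CD => //; apply: CZ => //; exact: ltW.
have h1 : 0 <= pairing d (- xs).
  apply: Hdir => t t0 t1.
  have -> : xs + t *: - xs = (1 - t) *: xs.
    by rewrite scalerBl scale1r scalerN.
  by apply: cone_scale => //; lra.
have d0 : d != 0.
  by apply/eqP => /eqP; rewrite subr_eq0 => /eqP E; apply: Cp; rewrite -E.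
have h2 := pairing_self_gt0 d0.
have -> : p = xs - d by rewrite /d opprB addrC subrK.
rewrite pairingBr; rewrite pairingNr in h1; lra.
Qed.

End Sep.


Section PF.
Variables (R : realType) (n : nat).
Implicit Types (f g h w x y z : 'rV[R]_n) (A : 'M[R]_n) (C : set 'rV[R]_n).

Lemma iter_pow A j x : iter j (linmap A) x = x *m A ^+ j.
Proof.
elim: j => [|j IH] /=; first by rewrite expr0 mulmx1.
by rewrite IH /linmap -mulmxA mulmxE -exprSr.
Qed.

Lemma commA A k : A *m A ^+ k = A ^+ k *m A.
Proof. by rewrite mulmxE -exprS exprSr. Qed.

Lemma pos_pow C A j x : C_positive C (linmap A) -> C x -> C (x *m A ^+ j).
Proof. by move=> HA Cx; rewrite -iter_pow; elim: j => //= j IH; apply: HA. Qed.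

Lemma pairing_delta g i : pairing g (delta_mx ord0 i) = g ord0 i.
Proof.
rewrite /pairing (bigD1 i) //= big1 ?addr0; first by rewrite mxE !eqxx mulr1.
by move=> j ji; rewrite mxE eqxx /= (negbTE ji) mulr0.
Qed.

Lemma exists_nonzero C : (0 < n)%N -> proper_cone C ->
  exists x0, C x0 /\ x0 != 0.
Proof.
move=> n0 [cC _ _ gen].
pose v : 'rV[R]_n := const_mx 1.
have v0 : v != 0.
  apply/eqP => /rowP /(_ (Ordinal n0)); rewrite !mxE => /eqP; by rewrite oner_eq0.
have [x [y [Cx Cy E]]] := gen v.
have [x0|] := eqVneq x 0; last by move=> H; exists x.
exists y; split => //; apply/eqP => y0; move: v0; by rewrite E x0 y0 subr0 eqxx.
Qed.

Lemma dir_bounds C e : interior C e ->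
  exists r : 'I_n -> R, forall i, 0 < r i /\
    forall t : R, `|t| < r i -> C (e + t *: delta_mx ord0 i).
Proof.
move=> ei.
have H : forall i, exists r : R, 0 < r /\
    forall t : R, `|t| < r -> C (e + t *: delta_mx ord0 i).
  by move=> i; have [r r0 Hr] := nbhs_dir (delta_mx ord0 i) ei; exists r.
by have [r Hr] := choice H; exists r.
Qed.

Lemma S_bound C e (r : 'I_n -> R) g : (forall i, 0 < r i /\
    forall t : R, `|t| < r i -> C (e + t *: delta_mx ord0 i)) ->
  dual_cone C g -> pairing g e = 1 -> forall i, `|g ord0 i| <= 2 / r i.
Proof.
move=> Hr gC ge i; have [r0 Hi] := Hr i.
have h2 : `|r i / 2| < r i by rewrite gtr0_norm ?divr_gt0 // ltr_pdivrMr // ltr_pMr // ltr1n.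
have h2' : `|- (r i / 2)| < r i by rewrite normrN.
have := gC _ (Hi _ h2); have := gC _ (Hi _ h2').
rewrite !pairingDr !pairingZr !pairing_delta ge => H1 H2.
have -> : 2 / r i = 1 / (r i / 2) by rewrite invf_div mul1r.
have s0 : 0 < r i / 2 by rewrite divr_gt0.
rewrite ler_pdivlMr // -[r i / 2 in X in X <= _]gtr0_norm // -normrM ler_norml.
by apply/andP; split; lra.
Qed.


Lemma PF C A k : (0 < n)%N -> proper_cone C -> C_positive C (linmap A) ->
  (1 <= k)%N -> C_strictly_positive C (iter k (linmap A)) ->
  exists f (l : R), [/\ interior (dual_cone C) f, 0 < l &
     forall x, pairing f (x *m A) = l * pairing f x].
Proof.
move=> n0 pC HA k1 Hk.
have [cC clC sal gen] := pC.
have [x0 [Cx0 x00]] := exists_nonzero n0 pC.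
have Hkp : forall x, C x -> x != 0 -> interior C (x *m A ^+ k).
  by move=> x Cx xn0; rewrite -iter_pow; apply: Hk.
pose e := x0 *m A ^+ k.
have ei : interior C e := Hkp _ Cx0 x00.
have [r Hr] := dir_bounds ei.
pose S := [set g | dual_cone C g /\ pairing g e = 1].
pose Bd i := 2 / r i.
have Sb : forall g, S g -> forall i, `|g ord0 i| <= Bd i.
  by move=> g [gC ge]; apply: (S_bound Hr gC ge).
have cS : compact S.
  have Hb := box_compact (B := Bd).
  have cl : closed S.
    apply: closedI; first exact: dual_closed.
    apply: closed_eq_fun; exact: pairingl_continuous.
  have sub : S `<=` [set v : 'rV[R]_n | forall i, (`[- Bd i, Bd i]%classic) (v ord0 i)].
    by move=> g Sg; apply: in_box; apply: Sb.
  exact: (subclosed_compact cl Hb sub).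
pose w := e *m A.
pose M := \sum_i Bd i * `|w ord0 i|.
have Bd0 : forall i, 0 < Bd i by move=> i; have [r0 _] := Hr i; rewrite divr_gt0.
have M0 : 0 <= M by apply: sumr_ge0 => i _; rewrite mulr_ge0 // ltW.
have pairS : forall g, S g -> forall v, pairing g v <= \sum_i Bd i * `|v ord0 i|.
  move=> g Sg v; apply: le_trans (ler_norm _) _; apply: le_trans (pairing_le_abs _ _) _.
  by apply: ler_sum => i _; apply: ler_wpM2r => //; apply: Sb.
have muM : forall g mu, S g -> (forall x, C x -> mu * pairing g x <= pairing g (x *m A)) ->
    mu <= M.
  move=> g mu Sg H; have := H _ (interior_subset ei); have [_ ->] := Sg.
  by rewrite mulr1 => h; apply: le_trans h _; apply: pairS.
have c1 : continuous (fun pr : 'rV[R]_n * R => pr.1)  by move=> p; exact: cvg_fst.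
have c2 : continuous (fun pr : 'rV[R]_n * R => pr.2)  by move=> p; exact: cvg_snd.
pose T := (S `*` `[0, M]%classic) `&` \bigcap_(x in C)
   [set pr : 'rV[R]_n * R | 0 <= pairing pr.1 (x *m A) - pr.2 * pairing pr.1 x].
have cT : compact T.
  apply: compact_closedI.
    by apply: compact_setX => //; exact: segment_compact.
  apply: closed_bigI => x _; apply: closed_ge_fun => p.
  apply: (@continuousB _ R^o _ (fun pr : 'rV[R]_n * R => pairing pr.1 (x *m A))
     (fun pr : 'rV[R]_n * R => pr.2 * pairing pr.1 x)).
    have hc := (pairing_continuous c1 (@cst_continuous _ _ (x *m A))). exact: (hc p).
  apply: continuousM; first exact: c2.
  have hc := (pairing_continuous c1 (@cst_continuous _ _ x)). exact: (hc p).
have nCx0 : ~ C (- x0) by move=> H; move/eqP: x00; apply; apply: sal.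
have [g0 [g0C g0p]] := separation cC clC nCx0.
have g0n0 : g0 != 0 by apply/eqP => g00; move: g0p; rewrite g00 pairing0l ltxx.
have c0 := dual_int_pos g0C g0n0 ei.
pose gs0 := (pairing g0 e)^-1 *: g0.
have Sgs0 : S gs0.
  split; last by rewrite pairingZl mulVf // gt_eqF.
  by move=> x Cx; rewrite pairingZl; apply: mulr_ge0; [rewrite invr_ge0 ltW | apply: g0C].
have ne : T !=set0.
  exists (gs0, 0); split; first by split => //=; rewrite in_itv /= lexx M0.
  move=> x Cx /=; rewrite mul0r subr0; apply: Sgs0.1; exact: HA.
have [[gs mus] /set_mem [[Sgs muI] Hfeas] Hmax] :=
  compact_EVT_max ne cT (continuous_subspaceT c2).
have mus0 : 0 <= mus by move: muI; rewrite /= in_itv /= => /andP [].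
have gsC : dual_cone C gs := Sgs.1.
have gse : pairing gs e = 1 := Sgs.2.
have gsn0 : gs != 0 by apply/eqP => g00; move: gse; rewrite g00 pairing0l => /eqP; rewrite eq_sym oner_eq0.
have Hfeas' : forall x, C x -> 0 <= pairing gs (x *m A) - mus * pairing gs x.
  by move=> x Cx; exact: (Hfeas x Cx).
have eig : forall x, pairing gs (x *m A) = mus * pairing gs x.
  pose h := gs *m A^T - mus *: gs.
  have ph : forall x, pairing h x = pairing gs (x *m A) - mus * pairing gs x.
    by move=> x; rewrite pairingBl pairing_mul pairingZl.
  have [h0|hn0] := eqVneq h 0.
    by move=> x; apply/eqP; rewrite -subr_eq0 -ph h0 pairing0l.
  exfalso.
  have hC : dual_cone C h by move=> x Cx; rewrite ph; exact: Hfeas'.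
  pose g' := gs *m (A ^+ k)^T.
  have pg' : forall x, pairing g' x = pairing gs (x *m A ^+ k).
    by move=> x; rewrite pairing_mul.
  pose phi := h *m (A ^+ k)^T.
  have pphi : forall x, pairing phi x = pairing h (x *m A ^+ k).
    by move=> x; rewrite pairing_mul.
  have key : forall x, pairing phi x = pairing g' (x *m A) - mus * pairing g' x.
    by move=> x; rewrite pphi ph !pg' -!mulmxA commA.
  have phipos : forall x, C x -> x != 0 -> 0 < pairing phi x.
    by move=> x Cx xn0; rewrite pphi; apply: (dual_int_pos hC hn0); apply: Hkp.
  have ne1 : C1 C !=set0 by exists ((N1 x0)^-1 *: x0); exact: C1_normalize.
  have [um /set_mem [Cum Num] Hmin] := compact_EVT_min ne1 (C1_compact clC)
    (continuous_subspaceT (@pairingr_continuous R n phi)).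
  have um0 : um != 0.
    by apply/eqP => u0; move: Num; rewrite u0 /N1 big1 => [/eqP|i _]; [rewrite eq_sym oner_eq0 | rewrite mxE normr0].
  have m0 := phipos _ Cum um0.
  set m := pairing phi um in m0 Hmin.
  pose G := N1 g'.
  have G0 : 0 <= G by apply: N1_ge0.
  pose eps := m / (G + 1).
  have eps0 : 0 < eps by rewrite divr_gt0 // ltr_wpDl.
  have epsG : eps * G <= m.
    rewrite /eps mulrAC ler_pdivrMr ?ltr_wpDl // ler_wpM2l ?ltW //; lra.
  have Heps : forall x, C x -> eps * pairing g' x <= pairing phi x.
    move=> x Cx; have [->|xn0] := eqVneq x 0; first by rewrite !pairing0r mulr0.
    have Ex : x = N1 x *: ((N1 x)^-1 *: x).
      by rewrite scalerA divff ?scale1r // gt_eqF // N1_neq0.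
    have Cu := C1_normalize cC Cx xn0.
    move: Cu; set u := _ *: x => Cu.
    have h1 := Hmin u (mem_set Cu).
    have [_ Nu] := Cu.
    have h2 : `|pairing g' u| <= G.
      by apply: pairing_le_box => i; rewrite -Nu; apply: coord_le_N1.
    have h3 : pairing g' u <= G := le_trans (ler_norm _) h2.
    have k2 : eps * pairing g' u <= pairing phi u.
      apply: (le_trans _ h1); apply: (le_trans _ epsG); rewrite ler_wpM2l // ltW //.
    have -> : pairing g' x = N1 x * pairing g' u by rewrite {1}Ex pairingZr.
    have -> : pairing phi x = N1 x * pairing phi u by rewrite {1}Ex pairingZr.
    rewrite mulrCA; apply: ler_wpM2l => //; exact: N1_ge0.
  have g'C : dual_cone C g'.
    by move=> x Cx; rewrite pg'; apply: gsC; apply: pos_pow.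
  have g'1 : pairing g' x0 = 1 by rewrite pg'.
  have g'n0 : g' != 0.
    by apply/eqP => g00; move: g'1; rewrite g00 pairing0l => /eqP; rewrite eq_sym oner_eq0.
  have cpos := dual_int_pos g'C g'n0 ei.
  set c := pairing g' e in cpos.
  pose g'' := c^-1 *: g'.
  have Sg'' : S g''.
    split; last by rewrite pairingZl mulVf // gt_eqF.
    by move=> x Cx; rewrite pairingZl; apply: mulr_ge0; [rewrite invr_ge0 ltW | apply: g'C].
  have feas : forall x, C x -> (mus + eps) * pairing g'' x <= pairing g'' (x *m A).
    move=> x Cx; rewrite !pairingZl mulrCA; apply: ler_wpM2l; first by rewrite invr_ge0 ltW.
    have := Heps _ Cx; rewrite key; lra.
  have Tg : T (g'', mus + eps).
    split; first split => //=.
      rewrite in_itv /=; apply/andP; split; first by rewrite addr_ge0 // ltW.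
      exact: muM Sg'' feas.
    by move=> x Cx /=; rewrite subr_ge0; apply: feas.
  have := Hmax _ (mem_set Tg); rewrite /=; lra.
have powe : forall j x, pairing gs (x *m A ^+ j) = mus ^+ j * pairing gs x.
  elim=> [|j IH] x; first by rewrite expr0 mulmx1 mul1r.
  by rewrite exprSr -mulmxE mulmxA eig IH mulrA -exprS.
have pos : forall x, C x -> x != 0 -> 0 < mus ^+ k * pairing gs x.
  by move=> x Cx xn0; rewrite -powe; apply: (dual_int_pos gsC gsn0); apply: Hkp.
have musp : 0 < mus.
  rewrite lt_def mus0 andbT; apply/eqP => m0; have := pos _ Cx0 x00.
  by rewrite m0 expr0n (negbTE (lt0n_neq0 k1)) mul0r ltxx.
have gpos : forall x, C x -> x != 0 -> 0 < pairing gs x.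
  by move=> x Cx xn0; have := pos _ Cx xn0; rewrite pmulr_rgt0 // exprn_gt0.
exists gs, mus; split => //.
exact: (int_dual_of_pos cC clC Cx0 x00 gpos).
Qed.
End PF.

Theorem proposition2 (R : realType) (n : nat) (C : set 'rV[R]_n) :
  (0 < n)%N -> proper_cone C ->
  gamma_cone C = sup_soles_gamma_aff C.
Proof.
move=> n0 pC; apply: main_of_PF; last by case: pC.
by move=> A k Hp k1 Hk; exact: (PF n0 pC Hp k1 Hk).
Qed.
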